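(* Let $n\geq 2$ and $k\in\{0,\ldots,n-1\}$ be integers, and define $$\varphi_{n,k}(x)=\sum_{i=0}^{n-1}\frac{1}{1-\frac{i}{n-1}x}-\sum_{i=0}^{n-k-1}\frac{1}{1-x-\frac{i}{n-1}x},\qquad x\in\left[0,\frac{n-1}{2n-k-2}\right).$$ Then there exists $x_{n,k}\in\left[\frac{k-1}{n-1},\frac{k}{n-1}\right]$ such that $\varphi_{n,k}$ is positive on $[0,x_{n,k})$ and negative on $\left(x_{n,k},\frac{n-1}{2n-k-2}\right)$. *)

(* Defs.v *)
From HB Require Import structures.
From mathcomp Require Import all_boot all_order all_algebra.
From mathcomp Require Import reals.
Set Implicit Arguments. Unset Strict Implicit. Unset Printing Implicit Defensive.
Import Order.TTheory GRing.Theory Num.Theory.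
Local Open Scope ring_scope.

Definition phi (R : realType) (n k : nat) (x : R) : R :=
  \sum_(0 <= i < n) (1 - (i%:R / (n.-1)%:R) * x)^-1
  - \sum_(0 <= i < n - k) (1 - x - (i%:R / (n.-1)%:R) * x)^-1.

Definition phi_bound (R : realType) (n k : nat) : R :=
  (n.-1)%:R / (2 * n - k - 2)%N%:R.

(* Main.v *)
Require Import Defs.
From HB Require Import structures.
From mathcomp Require Import all_boot all_order all_algebra.
From mathcomp Require Import reals.
From mathcomp Require Import classical_sets sequences exp.
From mathcomp Require Import lra zify ring.
Import Order.TTheory GRing.Theory Num.Theory.
Local Open Scope ring_scope.

Lemma K1 (R : realType) (w c : R) : 0 <= c -> 0 < w - c ->
  expR (c / w) <= w / (w - c).
Proof.
move=> c0 wc.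
have w0 : 0 < w by lra.
have h1 : 1 + - (c / w) <= expR (- (c / w)) by exact: expR_ge1Dx.
have e : 1 + - (c / w) = (w - c) / w by field; rewrite gt_eqF.
rewrite e ler_pdivrMr // in h1.
have EF : expR (c / w) * expR (- (c / w)) = 1 by rewrite -expRD subrr expR0.
have E0 := expR_gt0 (c / w).
rewrite ler_pdivlMr //.
nra.
Qed.

Lemma K2 (R : realType) (w c : R) : 0 < w ->
  (w + c) / w <= expR (c / w).
Proof.
move=> w0; have e : (w + c) / w = 1 + c / w by field; rewrite gt_eqF.
by rewrite e; exact: expR_ge1Dx.
Qed.

Lemma P1 (R : realType) (s c : R) (N : nat) : 0 <= c -> 0 < s - N%:R * c ->
  expR (c * \sum_(i < N) (s - i%:R * c)^-1) <= s / (s - N%:R * c).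
Proof.
move=> c0; elim: N => [|N IH] h.
  by rewrite big_ord0 mulr0 expR0 mul0r subr0 divff // gt_eqF //; lra.
rewrite big_ord_recr /= mulrDr expRD.
have N0 : 0 <= N%:R :> R by rewrite ler0n.
have h' : 0 < s - N%:R * c by move: h; rewrite -natr1; nra.
have hw : 0 < (s - N%:R * c) - c by move: h; rewrite -natr1; lra.
have := @K1 _ _ _ c0 hw.
rewrite (_ : s - N.+1%:R * c = (s - N%:R * c) - c); last by rewrite -natr1; ring.
move=> hk.
apply: le_trans (ler_pM _ _ (IH h') hk) _.
- exact: ltW (expR_gt0 _).
- exact: ltW (expR_gt0 _).
have s0 : 0 < s by nra.
rewrite le_eqVlt; apply/orP; left; apply/eqP.
field; rewrite !gt_eqF //.
Qed.

Lemma P2 (R : realType) (r c : R) (N : nat) : 0 <= c -> 0 < r - N%:R * c ->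
  r / (r - N%:R * c) <= expR (c * \sum_(i < N) (r - (i.+1)%:R * c)^-1).
Proof.
move=> c0; elim: N => [|N IH] h.
  by rewrite big_ord0 mulr0 expR0 mul0r subr0 divff // gt_eqF //; lra.
rewrite big_ord_recr /= mulrDr expRD.
have N0 : 0 <= N%:R :> R by rewrite ler0n.
rewrite -natr1 in h *.
have h' : 0 < r - N%:R * c by nra.
have := @K2 _ _ c h.
rewrite (_ : r - (N%:R + 1) * c + c = r - N%:R * c); last by ring.
move=> hk.
have r0 : 0 < r by nra.
rewrite (_ : r / (r - (N%:R + 1) * c) = r / (r - N%:R * c) * ((r - N%:R * c) / (r - (N%:R + 1) * c))); last first.
  by field; rewrite !gt_eqF.
apply: ler_pM; [apply: divr_ge0; lra | apply: divr_ge0; lra | exact: IH h' | exact: hk].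
Qed.

Lemma phi_split (R : realType) (m k : nat) (x : R) : (0 < m)%N -> (k <= m)%N ->
  phi m.+1 k x = \sum_(i < m) (1 - i%:R * (x / m%:R))^-1
     - \sum_(i < m - k) (1 - m%:R * (x / m%:R) - (i.+1)%:R * (x / m%:R))^-1.
Proof.
move=> m0 km.
have M0 : m%:R != 0 :> R by rewrite pnatr_eq0 -lt0n.
rewrite /phi /= !big_mkord subSn // big_ord_recr big_ord_recl /=.
rewrite divff // mul1r !mul0r subr0.
rewrite (eq_bigr (fun i : 'I_m => (1 - i%:R * (x / m%:R))^-1)); last first.
  by move=> i _; congr (_^-1); field.
rewrite (eq_bigr (fun i : 'I_(m - k) => (1 - m%:R * (x / m%:R) - (i.+1)%:R * (x / m%:R))^-1)); last first.
  by move=> i _; rewrite /bump /= add1n; congr (_^-1); field.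
ring.
Qed.

Lemma claimA (R : realType) (m k : nat) : (0 < k)%N -> (k < m)%N ->
  phi m.+1 k (k%:R / m%:R : R) <= 0.
Proof.
move=> k0 km.
have m0 : (0 < m)%N by apply: leq_ltn_trans km.
rewrite phi_split //; last exact: ltnW.
set M : R := m%:R.
set K : R := k%:R.
have M0 : 0 < M by rewrite ltr0n.
have K0 : 0 < K by rewrite ltr0n.
have KM : K < M by rewrite ltr_nat.
set c := K / M / M.
have hc : c * M * M = K by rewrite /c; field; rewrite gt_eqF.
have c0 : 0 < c by rewrite /c !divr_gt0.
have e1 : (1 - M * c) * M = M - K by rewrite -hc; ring.
have p1 : 0 < 1 - M * c by nra.
have hmk : (m - k)%:R = M - K :> R by rewrite natrB // ltnW.
have e2 : (1 - M * c) - (M - K) * c = (1 - M * c) * (1 - M * c) by rewrite -hc; ring.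
have p2 : 0 < (1 - M * c) - (m - k)%:R * c by rewrite hmk e2 mulr_gt0.
have A1 := @P1 R 1 c m (ltW c0) p1.
have A2 := @P2 R (1 - M * c) c (m - k) (ltW c0) p2.
rewrite hmk e2 in A2.
have e3 : 1 / (1 - M * c) = (1 - M * c) / ((1 - M * c) * (1 - M * c)).
  by field; rewrite gt_eqF.
rewrite e3 in A1.
have := le_trans A1 A2; rewrite ler_expR ler_pM2l // => H.
by rewrite subr_le0.
Qed.

Lemma claimB (R : realType) (m k : nat) : (1 < k)%N -> (k <= m)%N ->
  0 <= phi m.+1 k ((k%:R - 1) / m%:R : R).
Proof.
move=> k1 km.
have m0 : (0 < m)%N by apply: leq_trans km; apply: ltnW.
rewrite phi_split //.
set M : R := m%:R.
set K : R := k%:R.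
have M0 : 0 < M by rewrite ltr0n.
have K2 : 2 <= K by rewrite (ler_nat R 2 k).
have KM : K <= M by rewrite ler_nat.
set c := (K - 1) / M / M.
have hc : c * M * M = K - 1 by rewrite /c; field; rewrite gt_eqF.
have hK : K = c * M * M + 1 by rewrite hc; ring.
have c0 : 0 < c by rewrite /c !divr_gt0 //; lra.
have MM0 : 0 < M * M by rewrite mulr_gt0.
have pos : forall X Y : R, X * (M * M) = Y -> 0 < Y -> 0 < X.
  by move=> X Y e Y0; rewrite -(pmulr_lgt0 _ MM0) e.
have q1 : 0 < 1 + c - M * c.
  apply: (pos _ (M * M - (M - 1) * (K - 1))); first by rewrite hK; ring.
  nra.
have hmk : (m - k)%:R = M - K :> R by rewrite natrB.
have q2 : 0 < (1 - M * c - c) - (m - k)%:R * c.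
  rewrite hmk; apply: (pos _ ((M - (K - 1)) * (M - (K - 1)))); first by rewrite hK; ring.
  nra.
have B1 := @P2 R (1 + c) c m (ltW c0) q1.
have B2 := @P1 R (1 - M * c - c) c (m - k) (ltW c0) q2.
rewrite (eq_bigr (fun i : 'I_m => (1 + c - (i.+1)%:R * c)^-1)); last first.
  by move=> i _; rewrite -natr1; congr (_^-1); ring.
rewrite (eq_bigr (fun i : 'I_(m - k) => (1 - M * c - c - i%:R * c)^-1)); last first.
  by move=> i _; rewrite -natr1; congr (_^-1); ring.
rewrite hmk in q2 B2.
have q3 : 0 < 1 + (K - 1 - 2 * M + 1) * c.
  apply: (pos _ ((M - (K - 1)) * (M - (K - 1)) + (K - 1))); first by rewrite hK; ring.
  nra.
have B3 : (1 - M * c - c) / (1 - M * c - c - (M - K) * c) <= (1 + c) / (1 + c - M * c).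
  rewrite ler_pdivrMr // mulrAC ler_pdivlMr //.
  have e : (1 + c) * (1 - M * c - c - (M - K) * c) - (1 - M * c - c) * (1 + c - M * c)
         = c * (1 + (K - 1 - 2 * M + 1) * c) by rewrite hK; ring.
  rewrite -subr_ge0 e; apply: mulr_ge0; lra.
have := le_trans (le_trans B2 B3) B1; rewrite ler_expR ler_pM2l // => H.
by rewrite subr_ge0.
Qed.

Lemma T1 (R : realType) (a x y : R) : 0 <= a -> a <= 1 -> 0 <= x -> x <= y ->
  0 < 1 - a * y -> (1 - y) * (1 - a * y)^-1 <= (1 - x) * (1 - a * x)^-1.
Proof.
move=> a0 a1 x0 xy p.
have p' : 0 < 1 - a * x by nra.
rewrite ler_pdivrMr // mulrAC ler_pdivlMr //.
have H : 0 <= (y - x) * (1 - a) by apply: mulr_ge0; lra.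
nra.
Qed.

Lemma T2 (R : realType) (b x y : R) : 0 <= b -> 0 <= x -> x <= y ->
  0 < 1 - y - b * y -> (1 - x) * (1 - x - b * x)^-1 <= (1 - y) * (1 - y - b * y)^-1.
Proof.
move=> b0 x0 xy p.
have p' : 0 < 1 - x - b * x by nra.
rewrite ler_pdivrMr // mulrAC ler_pdivlMr //.
have H : 0 <= b * (y - x) by apply: mulr_ge0; lra.
nra.
Qed.

Lemma hdec (R : realType) (m k : nat) (x y : R) : (0 < m)%N -> (k <= m)%N ->
  0 <= x -> x < y -> y * (2 * m%:R - k%:R) < m%:R ->
  (1 - y) * phi m.+1 k y < (1 - x) * phi m.+1 k x.
Proof.
move=> m0 km x0 xy yd.
set M : R := m%:R. set K : R := k%:R.
have M0 : 0 < M by rewrite ltr0n.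
have K0 : 0 <= K by rewrite ler0n.
have KM : K <= M by rewrite ler_nat.
have y0 : 0 <= y by lra.
have y1 : y < 1 by nra.
rewrite /phi /= !mulrBr !mulr_sumr !big_mkord.
have HP : \sum_(i < m.+1) (1 - y) * (1 - i%:R / M * y)^-1
        < \sum_(i < m.+1) (1 - x) * (1 - i%:R / M * x)^-1.
  rewrite big_ord_recl [X in _ < X]big_ord_recl /= !mul0r !subr0 invr1 !mulr1.
  apply: ltr_leD; first lra.
  apply: ler_sum => i _.
  have iM : (lift ord0 i)%:R <= M by rewrite ler_nat -ltnS ltn_ord.
  have a0 : 0 <= (lift ord0 i)%:R / M by rewrite divr_ge0 // ler0n.
  have a1 : (lift ord0 i)%:R / M <= 1 by rewrite ler_pdivrMr // mul1r.
  apply: T1 => //; first exact: ltW.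
  nra.
have HN : \sum_(i < m.+1 - k) (1 - x) * (1 - x - i%:R / M * x)^-1
        <= \sum_(i < m.+1 - k) (1 - y) * (1 - y - i%:R / M * y)^-1.
  apply: ler_sum => i _.
  have iM : i%:R <= M - K.
    rewrite -natrB // ler_nat -ltnS -subSn //; exact: ltn_ord.
  have b0 : 0 <= i%:R / M by rewrite divr_ge0 // ler0n.
  have bM : i%:R / M * M = i%:R by field; rewrite gt_eqF.
  apply: T2 => //; first exact: ltW.
  have : 0 < M - M * y - i%:R / M * M * y by rewrite bM; nra.
  move=> H; nra.
lra.
Qed.

Lemma phi0 (R : realType) (m k : nat) : (k <= m.+1)%N -> phi m.+1 k (0 : R) = k%:R.
Proof.
move=> km; rewrite /phi.
rewrite (eq_bigr (fun _ => 1)); last by move=> i _; rewrite mulr0 subr0 invr1.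
rewrite [X in _ - X](eq_bigr (fun _ => 1)); last by move=> i _; rewrite !mulr0 !subr0 invr1.
rewrite !sumr_const_nat !subn0 natrB //; ring.
Qed.

Theorem lemma2p3 (R : realType) (n k : nat) :
  (2 <= n)%N -> (k < n)%N ->
  exists x0 : R,
    (k%:R - 1) / (n.-1)%:R <= x0 <= k%:R / (n.-1)%:R /\
    (forall x : R, 0 <= x < x0 -> 0 < phi n k x) /\
    (forall x : R, x0 < x < phi_bound R n k -> phi n k x < 0).
Proof.
case: n => [//|m] n2 kn.
have m0 : (0 < m)%N := n2.
have km : (k <= m)%N := kn.
change (m.+1).-1 with m.
set M : R := m%:R. set K : R := k%:R.
have M0 : 0 < M by rewrite ltr0n.
have K0 : 0 <= K by rewrite ler0n.
have KM : K <= M by rewrite ler_nat.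
have eB : phi_bound R m.+1 k = M / (2 * M - K).
  rewrite /phi_bound /=.
  have -> : (2 * m.+1 - k - 2 = 2 * m - k)%N by lia.
  by rewrite natrB ?natrM //; lia.
rewrite eB.
set D := 2 * M - K.
have D0 : 0 < D by rewrite /D; lra.
set B := M / D.
have B0 : 0 < B by rewrite divr_gt0.
have dom : forall t, (t < B) = (t * D < M) by move=> t; rewrite ltr_pdivlMr.
have B1 : B <= 1 by rewrite ler_pdivrMr // mul1r /D; lra.
pose h (t : R) := (1 - t) * phi m.+1 k t.
have hd : forall x y, 0 <= x -> x < y -> y < B -> h y < h x.
  by move=> x y x0 xy; rewrite dom => yd; apply: hdec.
pose S : set R := fun t => 0 <= t /\ t < B /\ 0 <= h t.
have h0 : h 0 = K by rewrite /h phi0 ?subr0 ?mul1r //; exact: ltnW.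
have S0 : S 0 by rewrite /S /=; split; [lra | split; [lra | rewrite h0]].
have Sne : (S !=set0)%classic by exists 0.
have Sub : has_ubound S by exists B => t [_ [tB _]]; exact: ltW.
have supub := ub_le_sup Sub.
have x0ge0 : 0 <= sup S by exact: supub _ S0.
exists (sup S); split; [apply/andP; split | split].
-
  case: (ltnP k 2) => k2.
    have : K <= 1 by rewrite /K (ler_nat R k 1) -ltnS.
    move=> K1; apply: le_trans x0ge0; rewrite pmulr_lle0 ?invr_gt0 //; lra.
  apply: supub; rewrite /S /=.
  have K2 : 2 <= K by rewrite /K (ler_nat R 2 k).
  have xge : 0 <= (K - 1) / M by rewrite divr_ge0 //; lra.
  have xB : (K - 1) / M < B.
    rewrite dom mulrAC ltr_pdivrMr // /D; nra.
  split; first exact: xge.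
  split; first exact: xB.
  rewrite /h; apply: mulr_ge0; first lra.
  exact: claimB.
-
  apply: ge_sup => // y [y0 [yB hy]].
  rewrite leNgt; apply/negP => Ky.
  case: (ltngtP k m) => [klt|kgt|keq].
  + have xge : 0 <= K / M by rewrite divr_ge0.
    have hK : h (K / M) <= 0.
      case: (posnP k) => [k0|kpos].
        by rewrite /K k0 mul0r h0 /K k0.
      rewrite /h; apply: mulr_ge0_le0; first lra.
      exact: claimA.
    have := hd _ _ xge Ky yB; lra.
  + by move: kgt; rewrite ltnNge km.
  + move: Ky; rewrite /K keq -/M divff ?gt_eqF // => Ky; lra.
-
  move=> x /andP [x0 xs].
  have [y Sy xy] := sup_gt Sne xs.
  case: Sy => [y0 [yB hy]].
  have := hd _ _ x0 xy yB => hxy.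
  have : 0 < h x by lra.
  by rewrite /h pmulr_rgt0 //; lra.
-
  move=> x /andP [xs xB].
  have x0 : 0 <= x by lra.
  have : h x < 0.
    rewrite ltNge; apply/negP => hx.
    have : S x by [].
    move/supub; lra.
  by rewrite /h pmulr_rlt0 //; lra.
Qed.
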